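(* Let $n,m$ be positive integers (spatial dimensions), let $a,A$ be real numbers with $A\neq-3$ and $$\frac{a+3}{2}=\frac{2}{A+3}.$$ Let $\eta,\mathcal{E}$ be real, let $l,\ell$ be real with $$l+\frac n2-1=\frac{2}{A+3}\left(\ell+\frac m2-1\right),$$ and set $E=-\eta\left(\frac{2}{A+3}\right)^2$, $\xi=-\mathcal{E}\left(\frac{2}{A+3}\right)^2$. Suppose $u\in C^2((0,\infty))$ satisfies the $n$-dimensional radial equation of $U(r)=\xi r^{a+1}$: $$u''(r)+\left[E-\frac{\left(l-\frac32+\frac n2\right)\left(l-\frac12+\frac n2\right)}{r^{2}}-\xi r^{a+1}\right]u(r)=0 .$$ Then $v(\rho)=\rho^{-(A+1)/4}u\!\left(\rho^{(A+3)/2}\right)$ (coordinates $r=\rho^{(A+3)/2}$, $u(r)=\rho^{(A+1)/4}v(\rho)$) satisfies the $m$-dimensional radial equation of $V(\rho)=\eta\rho^{A+1}$: $$v''(\rho)+\left[\mathcal{E}-\frac{\left(\ell-\frac32+\frac m2\right)\left(\ell-\frac12+\frac m2\right)}{\rho^{2}}-\eta\rho^{A+1}\right]v(\rho)=0 .$$ In this sense the $n$-dimensional potential $\xi r^{a+1}$ and the $m$-dimensional potential $\eta\rho^{A+1}$ are quantum Newtonianly dual, bound-state eigenfunctions of $U$ (energy $E$, angular quantum number $l$) being transformed into eigenfunctions of $V$ (energy $\mathcal{E}$, angular quantum number $\ell$).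
   Context: In $d$ spatial dimensions the radial equation for a central potential $W$ (units $\hbar=2m=1$), with $u(r)=rR(r)$ where $R$ is the radial wave function, energy $E$ and angular quantum number $l$, is $u''+\left[E-\frac{(l-\frac32+\frac d2)(l-\frac12+\frac d2)}{r^2}-W(r)\right]u=0$. *)

(* Defs.v *)
From Stdlib Require Import Reals.
From Coquelicot Require Import Coquelicot.
Open Scope R_scope.

Definition C2_pos (u : R -> R) : Prop :=
  forall r, 0 < r ->
    ex_derive u r /\ ex_derive (Derive u) r /\ continuous (Derive_n u 2) r.

Definition radial_eq_at (d : nat) (l E : R) (W : R -> R) (u : R -> R) (r : R) : Prop :=
  Derive_n u 2 r
  + (E - (l - 3/2 + INR d / 2) * (l - 1/2 + INR d / 2) / r ^ 2 - W r) * u r = 0.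

(* Main.v *)
Require Import Defs.
From Stdlib Require Import Reals Lra.
From Coquelicot Require Import Coquelicot.
Open Scope R_scope.

Definition dv (u : R -> R) (k p : R) (x : R) : R :=
  k * (1 * / x) * exp (k * ln x) * u (exp (p * ln x)) +
  exp (k * ln x) * (p * (1 * / x) * exp (p * ln x) * Derive u (exp (p * ln x))).

Theorem mainTheorem4 (n m : nat) (hn : (0 < n)%nat) (hm : (0 < m)%nat)
  (a A : R) (hA : A <> -3) (haA : (a + 3) / 2 = 2 / (A + 3))
  (eta calE l ell : R)
  (hl : l + INR n / 2 - 1 = 2 / (A + 3) * (ell + INR m / 2 - 1))
  (u : R -> R) (hu : C2_pos u)
  (hODE : forall r, 0 < r ->
     radial_eq_at n l (- eta * (2 / (A + 3)) ^ 2)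
       (fun r => - calE * (2 / (A + 3)) ^ 2 * Rpower r (a + 1)) u r) :
  let v := fun rho => Rpower rho (- (A + 1) / 4) * u (Rpower rho ((A + 3) / 2)) in
  forall rho, 0 < rho ->
    ex_derive v rho /\ ex_derive (Derive v) rho /\
    radial_eq_at m ell calE (fun rho => eta * Rpower rho (A + 1)) v rho.
Proof.
  intros v rho Hr.
  set (k := - (A + 1) / 4). set (p := (A + 3) / 2).
  assert (Hv : forall x, 0 < x -> is_derive v x (dv u k p x)).
  { intros x Hx. unfold v, Rpower, dv. fold k p.
    destruct (hu (exp (p * ln x)) (exp_pos _)) as [H1 _].
    auto_derive; [repeat split; auto | reflexivity]. }
  assert (HDv : locally rho (fun t => dv u k p t = Derive v t)).
  { exists (mkposreal rho Hr). intros t Ht. simpl in Ht.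
    unfold ball in Ht; simpl in Ht; unfold AbsRing_ball, abs, minus, plus, opp in Ht; simpl in Ht.
    assert (0 < t) by (apply Rabs_def2 in Ht; lra).
    symmetry; apply is_derive_unique; now apply Hv. }
  destruct (hu (exp (p * ln rho)) (exp_pos _)) as [H1 [H2 _]].
  evar (d2 : R).
  assert (Hd2 : is_derive (Derive v) rho d2).
  { apply (is_derive_ext_loc _ _ _ _ HDv). unfold dv.
    auto_derive.
    - repeat split; auto; lra.
    - unfold d2; reflexivity. }
  split; [exists (dv u k p rho); now apply Hv|].
  split; [exists d2; exact Hd2|].
  unfold radial_eq_at.
  change (Derive_n v 2 rho) with (Derive (Derive v) rho).
  rewrite (is_derive_unique _ _ _ Hd2). unfold d2.
  change (fun x : R => u x) with u.
  change (fun x : R => Derive u x) with (Derive u).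
  assert (HR := exp_pos (p * ln rho)).
  assert (Hp : p <> 0) by (unfold p; intro; apply hA; lra).
  assert (HA1 : Rpower rho (A + 1) = exp (p * ln rho) * exp (p * ln rho) / (rho * rho)).
  { unfold Rpower. replace ((A + 1) * ln rho) with (p * ln rho + p * ln rho + - ln rho + - ln rho) by (unfold p; lra).
    rewrite !exp_plus, !exp_Ropp, exp_ln by lra. field. lra. }
  assert (Ha1 : Rpower (exp (p * ln rho)) (a + 1) = rho * rho / (exp (p * ln rho) * exp (p * ln rho))).
  { unfold Rpower. rewrite ln_exp.
    assert (Ha : a = 2 / p - 3).
    { unfold p. unfold p in Hp. apply (f_equal (fun t => 2 * t - 3)) in haA.
      replace (2 * ((a + 3) / 2) - 3) with a in haA by field. rewrite haA. field.
      intro; apply hA; lra. }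
    replace ((a + 1) * (p * ln rho)) with (ln rho + ln rho + - (p * ln rho) + - (p * ln rho))
      by (rewrite Ha; field; auto).
    rewrite !exp_plus, !exp_Ropp, exp_ln by lra. field. lra. }
  specialize (hODE _ HR). unfold radial_eq_at in hODE. rewrite Ha1 in hODE.
  change (Derive_n u 2 (exp (p * ln rho))) with (Derive (Derive u) (exp (p * ln rho))) in hODE.
  rewrite HA1. unfold v, Rpower. fold k p.
  assert (Hk : k = (1 - p) / 2) by (unfold k, p; field).
  assert (HAp : A + 3 = 2 * p) by (unfold p; field).
  rewrite HAp in hODE, hl.
  assert (Hl : l = (ell + INR m / 2 - 1) / p - INR n / 2 + 1).
  { replace (2 / (2 * p)) with (/ p) in hl by (field; auto).
    replace ((ell + INR m / 2 - 1) / p) with (/ p * (ell + INR m / 2 - 1)) by (field; auto).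
    lra. }
  rewrite Hl in hODE. rewrite Hk.
  set (U2 := Derive (Derive u) (exp (p * ln rho))) in *.
  set (U1 := Derive u (exp (p * ln rho))) in *.
  set (U0 := u (exp (p * ln rho))) in *.
  set (R0 := exp (p * ln rho)) in *.
  set (P := exp ((1 - p) / 2 * ln rho)).
  set (N := INR n) in *. set (M := INR m) in *.
  assert (HU2 : U2 = - ((- eta * (2 / (2 * p)) ^ 2 -
      ((ell + M / 2 - 1) / p - N / 2 + 1 - 3 / 2 + N / 2) *
      ((ell + M / 2 - 1) / p - N / 2 + 1 - 1 / 2 + N / 2) / R0 ^ 2 -
      - calE * (2 / (2 * p)) ^ 2 * (rho * rho / (R0 * R0))) * U0)) by lra.
  rewrite HU2. field. split; [lra|split; lra].
Qed.
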